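(* Let $W_1,\dots,W_m\in\mathbb{R}^{n\times n}$ be eventually doubly stochastic signed adjacency matrices, and let $Q\in\mathbb{R}^{(n-1)\times n}$ satisfy $QQ^\top=I_{n-1}$, $Q\mathbf{1}=0$. If there exists a symmetric positive definite $P\in\mathbb{R}^{n\times n}$ such that \[ QW_k^\top PW_kQ^\top-QPQ^\top\prec0\quad\text{for all }k=1,\dots,m, \] then $\{W_1,\dots,W_m\}$ is a consensus set for the switched system $\mathbf{x}(t+1)=W_{\sigma(t)}\mathbf{x}(t)$.
   Context: $W_k$ are real matrices (entries of any sign). $W$ is eventually positive if there is $t_0\in\mathbb{Z}_{\ge0}$ with $W^t$ entrywise positive for all integers $t\ge t_0$; eventually doubly stochastic means eventually positive with $W\mathbf{1}=W^\top\mathbf{1}=\mathbf{1}$. $X\prec0$ means symmetric negative definite. A switching signal is any map $\sigma:\mathbb{Z}_{\ge0}\to\{1,\dots,m\}$; a consensus set is one for which, for every switching signal and every $\mathbf{x}(0)$, $\mathbf{x}(t)\to\alpha\mathbf{1}$ for some $\alpha\in\mathbb{R}$. *)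

(* Defs.v *)
From HB Require Import structures.
From mathcomp Require Import all_boot all_order all_algebra.
From mathcomp Require Import all_classical all_reals topology normedtype sequences.
Set Implicit Arguments. Unset Strict Implicit. Unset Printing Implicit Defensive.
Import Order.TTheory GRing.Theory Num.Theory.
Import numFieldNormedType.Exports.
Local Open Scope classical_set_scope.
Local Open Scope ring_scope.

Definition mxpow (R : realType) (n : nat) (W : 'M[R]_n) (t : nat) : 'M[R]_n :=
  iter t (mulmx W) 1%:M.

Definition ones (R : realType) (n : nat) : 'cV[R]_n := const_mx 1.

Definition eventually_positive (R : realType) (n : nat) (W : 'M[R]_n) : Prop :=
  exists t0 : nat, forall t : nat, (t0 <= t)%N ->
    forall i j : 'I_n, 0 < mxpow W t i j.

Definition eventually_doubly_stochastic (R : realType) (n : nat) (W : 'M[R]_n) : Prop :=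
  eventually_positive W /\ W *m ones R n = ones R n /\ W^T *m ones R n = ones R n.

Definition neg_def (R : realType) (n : nat) (X : 'M[R]_n) : Prop :=
  X^T = X /\ forall x : 'cV[R]_n, x != 0 -> (x^T *m X *m x) 0 0 < 0.

Definition pos_def (R : realType) (n : nat) (X : 'M[R]_n) : Prop :=
  X^T = X /\ forall x : 'cV[R]_n, x != 0 -> 0 < (x^T *m X *m x) 0 0.

Fixpoint traj (R : realType) (n m : nat) (W : 'I_m -> 'M[R]_n)
  (sigma : nat -> 'I_m) (x0 : 'cV[R]_n) (t : nat) : 'cV[R]_n :=
  match t with
  | 0 => x0
  | t'.+1 => W (sigma t') *m traj W sigma x0 t'
  end.

(* consensus set: for every switching signal and initial state, x(t) -> alpha 1
   (convergence componentwise, equivalent to convergence in R^n) *)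
Definition consensus_set (R : realType) (n m : nat) (W : 'I_m -> 'M[R]_n) : Prop :=
  forall (sigma : nat -> 'I_m) (x0 : 'cV[R]_n),
    exists alpha : R, forall i : 'I_n,
      (fun t => traj W sigma x0 t i 0) @ \oo --> alpha.

(* Main.v *)
Require Import Defs.
From HB Require Import structures.
From mathcomp Require Import all_boot all_order all_algebra.
From mathcomp Require Import all_classical all_reals topology normedtype sequences derive.
From mathcomp Require Import ring lra.
Import Order.TTheory GRing.Theory Num.Theory.
Import numFieldNormedType.Exports.
Local Open Scope classical_set_scope.
Local Open Scope ring_scope.
Lemma onesTones (R : realType) n : (ones R n)^T *m ones R n = (n%:R : R)%:M.
Proof.
apply/matrixP => i j; rewrite !ord1 !mxE.
rewrite (eq_bigr (fun _ => 1)); last by move=> k _; rewrite !mxE mulr1.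
by rewrite sumr_const card_ord /= mulr1n.
Qed.

Lemma trace_sq0 (R : realType) n (A : 'M[R]_n) : \tr (A *m A^T) = 0 -> A = 0.
Proof.
have D i : (A *m A^T) i i = \sum_j A i j ^+ 2.
  by rewrite mxE; apply: eq_bigr => j _; rewrite mxE expr2.
rewrite /mxtrace; under eq_bigr do rewrite D.
move=> H; apply/matrixP => i j; rewrite mxE.
have Hi := psumr_eq0P (fun i _ => sumr_ge0 _ (fun j _ => sqr_ge0 (A i j))) H.
have Hs := Hi i isT.
have := psumr_eq0P (fun j _ => sqr_ge0 (A i j)) Hs (i:=j) isT.
by move/eqP; rewrite sqrf_eq0 => /eqP.
Qed.

Lemma QtQ (R : realType) n (Q : 'M[R]_(n.-1, n)) : (0 < n)%N ->
  Q *m Q^T = 1%:M -> Q *m ones R n = 0 ->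
  Q^T *m Q = 1%:M - n%:R^-1 *: (ones R n *m (ones R n)^T).
Proof.
move=> n0 QQ Q1.
set J := ones R n *m (ones R n)^T.
set P := Q^T *m Q.
have PJ : P *m J = 0 by rewrite /P /J mulmxA -(mulmxA Q^T) Q1 mulmx0 mul0mx.
have JP : J *m P = 0.
  by rewrite /P /J mulmxA -(mulmxA _ _ Q^T) -trmx_mul Q1 trmx0 mulmx0 mul0mx.
have PP : P *m P = P by rewrite /P mulmxA -(mulmxA Q^T) QQ mulmx1.
have nn : (n%:R : R) != 0 by rewrite pnatr_eq0 -lt0n.
have JJ : J *m J = n%:R *: J.
  by rewrite /J mulmxA -(mulmxA (ones R n)) onesTones mul_mx_scalar scalemxAl.
set E := P + n%:R^-1 *: J.
have EE : E *m E = E.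
  rewrite /E mulmxDl !mulmxDr -!scalemxAl -!scalemxAr PP PJ JP JJ.
  by rewrite !scaler0 add0r addr0 !scalerA -mulrA mulVf // mulr1.
set Rm := 1%:M - E.
have RR : Rm *m Rm = Rm.
  by rewrite /Rm mulmxBl !mulmxBr EE !mul1mx mulmx1 subrr subr0.
have RT : Rm^T = Rm.
  by rewrite /Rm /E /P /J !linearD /= !linearN /= !linearZ /= !trmx_mul !trmxK trmx1.
have trR : \tr Rm = 0.
  rewrite /Rm /E /P /J !linearD /= !linearN /= linearZ /= mxtrace_mulC QQ.
  rewrite mxtrace_mulC onesTones !mxtrace1 mxtrace_scalar mulr1n.
  rewrite mulVf // -[n in n%:R](prednK n0) mulrSr; lra.
have R0 : Rm = 0 by apply: trace_sq0; rewrite RT RR.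
move: R0; rewrite /Rm /E => /eqP; rewrite subr_eq0 => /eqP ->.
by rewrite addrK.
Qed.

Lemma QtQy (R : realType) n (Q : 'M[R]_(n.-1, n)) (y : 'cV[R]_n) : (0 < n)%N ->
  Q *m Q^T = 1%:M -> Q *m ones R n = 0 -> (ones R n)^T *m y = 0 ->
  Q^T *m (Q *m y) = y.
Proof.
move=> n0 QQ Q1 y0.
by rewrite mulmxA QtQ // mulmxBl mul1mx -scalemxAl -mulmxA y0 mulmx0 scaler0 subr0.
Qed.

Lemma decr (R : realType) n (Q : 'M[R]_(n.-1, n)) (P Wk : 'M[R]_n) : (0 < n)%N ->
  Q *m Q^T = 1%:M -> Q *m ones R n = 0 ->
  neg_def (Q *m Wk^T *m P *m Wk *m Q^T - Q *m P *m Q^T) ->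
  forall y : 'cV[R]_n, (ones R n)^T *m y = 0 -> y != 0 ->
  0 < (y^T *m (P - Wk^T *m P *m Wk) *m y) 0 0.
Proof.
move=> n0 QQ Q1 [_ ND] y y0 yn0.
have Hy := QtQy R n Q y n0 QQ Q1 y0.
set z := Q *m y in Hy.
have zn0 : z != 0.
  apply: contraNneq yn0 => zz; by rewrite -Hy zz mulmx0.
have zQ : z^T *m Q = y^T by rewrite -[in RHS]Hy [in RHS]trmx_mul trmxK.
have := ND z zn0.
have Hy' : Q^T *m Q *m y = y by rewrite -mulmxA.
rewrite mulmxBr mulmxBl !mulmxA zQ -!(mulmxA _ Q^T Q) -!(mulmxA _ (Q^T *m Q) y) Hy'.
rewrite mulmxBr mulmxBl !mulmxA !mxE.
lra.
Qed.

Lemma sum_cont (T : topologicalType) (R : realType) (I : finType) (F : I -> T -> R) :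
  (forall i, continuous (F i)) -> continuous (fun x => \sum_i F i x).
Proof.
move=> Fc.
suff H : forall s : seq I, continuous (fun x => \sum_(i <- s) F i x).
  exact: (H (index_enum I)).
elim => [|a s IH].
  have -> : (fun x => \sum_(i <- [::]) F i x) = (fun _ => 0) by apply: funext => x; rewrite big_nil.
  exact: cst_continuous.
have -> : (fun x => \sum_(i <- a :: s) F i x) = (fun x => F a x + \sum_(i <- s) F i x).
  by apply: funext => x; rewrite big_cons.
move=> x; apply: continuousD; [exact: Fc | exact: IH].
Qed.

Lemma coord_le (R : realType) n (r : 'rV[R]_n) i : `|r 0 i| <= `|r|.
Proof.
rewrite [leRHS]/Num.Def.normr /= mx_normrE; apply/bigmax_geP; right => /=.
by exists (0, i).
Qed.

Lemma quad_cont (R : realType) n (A : 'M[R]_n) :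
  continuous (fun r : 'rV[R]_n => (r *m A *m r^T) 0 0).
Proof.
have -> : (fun r : 'rV[R]_n => (r *m A *m r^T) 0 0) =
   (fun r => \sum_j (\sum_k r 0 k * A k j) * r 0 j).
  apply: funext => r; rewrite mxE; apply: eq_bigr => j _; rewrite !mxE.
  by congr (_ * _); apply: eq_bigr => k _; rewrite mxE.
apply: sum_cont => j x; apply: continuousM; last exact: coord_continuous.
suff Hc : continuous (fun r : 'rV[R]_n => \sum_k r 0 k * A k j) by exact: Hc.
apply: sum_cont => k y.
apply: continuousM; [exact: coord_continuous | exact: cst_continuous].
Qed.

Lemma lin_cont (R : realType) n (v : 'cV[R]_n) :
  continuous (fun r : 'rV[R]_n => (r *m v) 0 0).
Proof.
have -> : (fun r : 'rV[R]_n => (r *m v) 0 0) = (fun r => \sum_j r 0 j * v j 0).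
  by apply: funext => r; rewrite mxE.
apply: sum_cont => j x; apply: continuousM; [exact: coord_continuous | exact: cst_continuous].
Qed.

Lemma unif (R : realType) n (A : 'M[R]_n) :
  (forall y : 'cV[R]_n, (ones R n)^T *m y = 0 -> y != 0 -> 0 < (y^T *m A *m y) 0 0) ->
  exists2 c : R, 0 < c & forall y : 'cV[R]_n, (ones R n)^T *m y = 0 ->
    forall i, c * (y i 0) ^+ 2 <= (y^T *m A *m y) 0 0.
Proof.
move=> Apos.
pose f := fun r : 'rV[R]_n => (r *m A *m r^T) 0 0.
pose g := fun r : 'rV[R]_n => (r *m ones R n) 0 0.
pose S := ((fun r : 'rV[R]_n => `|r|) @^-1` [set 1]) `&` (g @^-1` [set 0]).
have inS : forall y : 'cV[R]_n, (ones R n)^T *m y = 0 -> y != 0 ->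
    S (`|y^T|^-1 *: y^T).
  move=> y y0 yn0; have a0 : 0 < `|y^T| by rewrite normr_gt0 trmx_eq0.
  split => /=.
    by rewrite normrZ normfV normr_id mulVf // gt_eqF.
  rewrite /g -scalemxAl mxE -[y^T *m ones R n]trmxK trmx_mul trmxK y0.
  by rewrite trmx0 mxE mulr0.
have fZ : forall (a : R) r, f (a *: r) = a ^+ 2 * f r.
  by move=> a r; rewrite /f -scalemxAl linearZ /= -scalemxAl -scalemxAr scalerA mxE expr2.
have fS : forall y : 'cV[R]_n, (ones R n)^T *m y = 0 -> y != 0 ->
    (y^T *m A *m y) 0 0 = `|y^T| ^+ 2 * f (`|y^T|^-1 *: y^T).
  move=> y y0 yn0; have a0 : 0 < `|y^T| by rewrite normr_gt0 trmx_eq0.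
  have -> : y^T *m A *m y = y^T *m A *m y^T^T by rewrite trmxK.
  rewrite -/(f y^T) -fZ scalerA mulfV ?scale1r // gt_eqF //.
have compS : compact S.
  apply: (subclosed_compact _ (rV_compact (fun i => @segment_compact R (-1) 1))).
    apply: closedI.
      apply: (proj1 (continuous_closedP _) (@norm_continuous _ _)).
      exact: closed_eq.
    apply: (proj1 (continuous_closedP _) (@lin_cont R n (ones R n))).
    exact: closed_eq.
  move=> r [/= r1 _] i /=.
  by have := coord_le R n r i; rewrite r1 in_itv /= -ler_norml.
have fcont := quad_cont R n A.
have y0triv (c : R) (i : 'I_n) : c * ((0 : 'cV[R]_n) i 0) ^+ 2 <= ((0 : 'cV[R]_n)^T *m A *m 0) 0 0.
  by rewrite trmx0 mul0mx mulmx0 !mxE expr2 !mulr0.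
have ybnd : forall (y : 'cV[R]_n) i, y i 0 ^+ 2 <= `|y^T| ^+ 2.
  move=> y i; have := coord_le R n y^T i; rewrite mxE => h.
  rewrite -real_normK ?num_real //.
  by apply: ler_pM => //; exact: normr_ge0.
case: (pselect (S !=set0)) => [Sne | Se].
  have [r0 r0S r0min] := compact_EVT_min Sne compS (continuous_subspaceT fcont).
  have fpos : 0 < f r0.
    rewrite inE in r0S; case: r0S => /= n1 g0.
    have r0n : r0^T != 0.
      rewrite trmx_eq0; apply/eqP => r00; move: n1; rewrite r00 normr0 => /eqP.
      by rewrite eq_sym oner_eq0.
    have := Apos r0^T _ r0n; rewrite trmxK; apply.
    rewrite -trmx_mul; apply/matrixP => i j; rewrite !ord1 !mxE.
    by move: g0; rewrite /g mxE.
  exists (f r0) => //.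
  move=> y y0 i; case: (eqVneq y 0) => [->|yn0]; first exact: y0triv.
  rewrite fS //.
  have h1 := r0min _ (mem_set (inS y y0 yn0)).
  have h2 := ybnd y i.
  have h3 := sqr_ge0 `|y^T|.
  have h4 := sqr_ge0 (y i 0).
  move: fpos; rewrite /f => fpos.
  nra.
exists 1 => // y y0 i; case: (eqVneq y 0) => [->|yn0]; first exact: y0triv.
by exfalso; apply: Se; exists (`|y^T|^-1 *: y^T); apply: inS.
Qed.

Theorem theorem10 (R : realType) (n m : nat) (W : 'I_m -> 'M[R]_n)
  (Q : 'M[R]_(n.-1, n)) :
  (forall k : 'I_m, eventually_doubly_stochastic (W k)) ->
  Q *m Q^T = 1%:M ->
  Q *m ones R n = 0 ->
  (exists P : 'M[R]_n, pos_def P /\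
     forall k : 'I_m, neg_def (Q *m (W k)^T *m P *m W k *m Q^T - Q *m P *m Q^T)) ->
  consensus_set W.
Proof.
move=> Hds QQ Q1 [P [[PT Ppos] ND]] sigma x0.
case: (posnP n) => [n0 | n0].
  by exists 0 => -[k hk]; exfalso; move: hk; rewrite n0.
pose A k := P - (W k)^T *m P *m W k.
have Hc : forall k, exists c : R, 0 < c /\ forall y : 'cV[R]_n, (ones R n)^T *m y = 0 ->
    forall i, c * (y i 0) ^+ 2 <= (y^T *m A k *m y) 0 0.
  move=> k; have [c c0 Hc] := unif R n (A k) (decr R n Q P (W k) n0 QQ Q1 (ND k)).
  by exists c.
have [cf Hcf] := choice Hc.
pose c := \big[Num.min/1]_k cf k.
have c0 : 0 < c.
  rewrite /c; elim/big_ind: _ => //.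
    by move=> a b ha hb; rewrite lt_min ha hb.
  by move=> k _; exact: (Hcf k).1.
have cle k : c <= cf k by rewrite /c (bigD1 k) //= ge_min lexx.
have Hunif k (y : 'cV[R]_n) i : (ones R n)^T *m y = 0 ->
    c * (y i 0) ^+ 2 <= (y^T *m A k *m y) 0 0.
  move=> y0; apply: le_trans ((Hcf k).2 y y0 i).
  by apply: ler_wpM2r => //; exact: sqr_ge0.
pose alpha := n%:R^-1 * ((ones R n)^T *m x0) 0 0.
pose y t := traj W sigma x0 t - alpha *: ones R n.
have ystep t : y t.+1 = W (sigma t) *m y t.
  by rewrite /y /= mulmxBr -scalemxAr (Hds _).2.1.
have oW k : (ones R n)^T *m W k = (ones R n)^T.
  by rewrite -[LHS]trmxK trmx_mul trmxK (Hds k).2.2.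
have ysum t : (ones R n)^T *m y t = 0.
  elim: t => [|t IH]; last by rewrite ystep mulmxA oW.
  rewrite /y /= mulmxBr -scalemxAr onesTones.
  apply/matrixP => i0 j; rewrite !ord1 !mxE eqxx mulr1n /alpha.
  by rewrite mulrAC mulVf ?mul1r ?mxE ?subrr // pnatr_eq0 -lt0n.
pose V t := ((y t)^T *m P *m y t) 0 0.
have Vge0 t : 0 <= V t.
  rewrite /V; case: (eqVneq (y t) 0) => [->|yn0].
    by rewrite trmx0 mul0mx mulmx0 mxE.
  exact/ltW/Ppos.
have Vstep t (j : 'I_n) : V t.+1 + c * (y t j 0) ^+ 2 <= V t.
  have := Hunif (sigma t) (y t) j (ysum t).
  rewrite /V ystep trmx_mul /A; move: (y t) => z.
  rewrite mulmxBr mulmxBl !mulmxA !mxE.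
  lra.
have Vnoninc : nonincreasing_seq V.
  apply/nonincreasing_seqP => t; have := Vstep t (Ordinal n0).
  have := sqr_ge0 (y t (Ordinal n0) 0).
  move: c0; rewrite /V; move: (c) => cc; nra.
have Vcvg : cvgn V.
  apply: nonincreasing_is_cvgn => //.
  by exists 0 => _ [t _ <-]; exact: Vge0.
have dcvg : (fun t => V t - V t.+1) @ \oo --> 0.
  have -> : 0 = limn V - limn V by rewrite subrr.
  apply: cvgB => //.
  by rewrite (cvg_shiftS V).
exists alpha => i; apply/cvgrPdist_lt => eps eps0.
have ce : 0 < c * eps ^+ 2 by rewrite mulr_gt0 // exprn_gt0.
move/cvgrPdist_lt: dcvg => /(_ _ ce) H; apply: filterS H => t Ht.
have -> : alpha - traj W sigma x0 t i 0 = - y t i 0.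
  by rewrite /y !mxE mulr1 opprB.
have h1 := Vstep t i.
rewrite normrN.
have h2 := real_normK (num_real (y t i 0)).
have h3 := normr_ge0 (y t i 0).
move: Ht; rewrite sub0r normrN => Ht.
have h4 := ler_norm (V t - V t.+1).
move: h1 h2 h3 h4 Ht c0 eps0; move: (c) (V t) (V t.+1) (y t i 0) => cc a b u.
move=> h1 h2 h3 h4 Ht c0 eps0.
have h5 : cc * u ^+ 2 < cc * eps ^+ 2 by lra.
rewrite ltr_pM2l // in h5.
nra.
Qed.
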